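(* The sets $\mathcal{U}_{ME}=\{(M,q)\mid ME[U](M)\le q\}$ and $\mathcal{U}_{GE}=\{(M,q)\mid GE[U](M)\le q\}$ are safety hyperproperties. That is, for every rational $q$, the sets of programs $\{M\mid ME[U](M)\le q\}$ and $\{M\mid GE[U](M)\le q\}$ are safety hyperproperties.
   Context: Stores map variables to values; $H$ is the high input variable and $O$ the low output variable. A trace is a sequence of stores. For a finite trace $t$, $t\circ t'$ is concatenation. A program is a set $M$ of infinite traces that is deterministic (two traces with the same initial value of $H$ are equal) and has a finite nonempty input domain $\mathbb{H}_M=\{\sigma_0(H)\}$. Input domains are unbounded in size. $M(h)$ is the output trace $(\sigma_1(O),\sigma_2(O),\dots)$ of the trace of $M$ starting with $H=h$. $\bot$ denotes termination. $M(h)=o$ means that for all $i$, $o_i=\bot$ or $M(h)_i=\bot$ or $M(h)_i=o_i$. For a distribution $\mu$ on $\mathbb{H}_M$, $\mu(O=o)=\sum_{h:M(h)=o}\mu(H=h)$, with conditional probabilities induced accordingly. $U$ is the uniform distribution on $\mathbb{H}_M$. Min-entropy QIF (log base 2): $\mathcal{V}[\mu](X)=\max_x\mu(X=x)$, $\mathcal{V}[\mu](X|Y)=\sum_y\mu(Y=y)\max_x\mu(X=x|Y=y)$, and $ME[\mu](M)=\log\frac1{\mathcal{V}[\mu](H)}-\log\frac1{\mathcal{V}[\mu](H|O)}$. Guessing-entropy QIF: $\mathcal{G}[\mu](X)=\sum_i i\,\mu(X=x_i)$ with the $x_i$ ordered by non-increasing probability; $\mathcal{G}[\mu](X|Y)=\sum_y\mu(Y=y)\sum_i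 i\,\mu(X=x_i|Y=y)$ with the analogous ordering for each $y$; and $GE[\mu](M)=\mathcal{G}[\mu](H)-\mathcal{G}[\mu](H|O)$. $\mathit{Prop}$ is the set of programs; $\mathit{Obs}$ is the set of deterministic finite sets of finite traces. For $S\in\mathit{Obs}$ and $T\in\mathit{Prop}$, $S\le T$ iff every $t\in S$ has some $t'$ with $t\circ t'\in T$. $P\subseteq\mathit{Prop}$ is a safety hyperproperty iff for every $S\in\mathit{Prop}\setminus P$ there is $T\in\mathit{Obs}$ with $T\le S$ such that no $S'\in\mathit{Prop}$ with $T\le S'$ belongs to $P$. A set $\mathcal{P}$ of pairs (program, rational) is a safety hyperproperty iff $\{M\mid(M,q)\in\mathcal{P}\}$ is one for every rational $q$. *)

(* Defs.v *)
From Stdlib Require Import Reals List Permutation Sorted ClassicalEpsilon QArith Qreals.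
Open Scope R_scope.

Definition var := nat.
Definition H : var := 0%nat.   (* high input variable *)
Definition O : var := 1%nat.   (* low output variable *)
Definition val := nat.         (* values: an infinite type, so input domains are unbounded *)
Definition store := var -> val.
Definition itrace := nat -> store.
Definition ftrace := list store.

Definition deterministic (M : itrace -> Prop) : Prop :=
  forall t t', M t -> M t' -> t 0%nat H = t' 0%nat H -> t = t'.

Definition input_domain_list (M : itrace -> Prop) (l : list val) : Prop :=
  NoDup l /\ forall h, In h l <-> exists t, M t /\ t 0%nat H = h.

Definition is_program (M : itrace -> Prop) : Prop :=
  deterministic M /\ exists l, l <> nil /\ input_domain_list M l.

Definition fdeterministic (S : ftrace -> Prop) : Prop :=
  forall s s' r r', S (s :: r) -> S (s' :: r') -> s H = s' H -> s :: r = s' :: r'.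

Definition is_obs (S : ftrace -> Prop) : Prop :=
  fdeterministic S /\ exists l : list ftrace, forall t, S t <-> In t l.

Definition tconcat (t : ftrace) (t' : itrace) : itrace :=
  fun i => if Nat.ltb i (length t) then nth i t (fun _ => 0%nat)
           else t' (i - length t)%nat.

Definition obs_le (S : ftrace -> Prop) (T : itrace -> Prop) : Prop :=
  forall t, S t -> exists t', T (tconcat t t').

Definition safety (P : (itrace -> Prop) -> Prop) : Prop :=
  forall S, is_program S -> ~ P S ->
    exists T, is_obs T /\ obs_le T S /\
      forall S', is_program S' -> obs_le T S' -> ~ P S'.

Definition dom (M : itrace -> Prop) : list val :=
  epsilon (inhabits nil) (input_domain_list M).

Definition out (M : itrace -> Prop) (h : val) : nat -> val :=
  epsilon (inhabits (fun _ => 0%nat))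
    (fun o => exists t, M t /\ t 0%nat H = h /\ forall i, o i = t (S i) O).

Definition outs (M : itrace -> Prop) : list (nat -> val) :=
  epsilon (inhabits nil)
    (fun l => NoDup l /\ forall o, In o l <-> exists h, In h (dom M) /\ out M h = o).

Definition ind (P : Prop) : R := if excluded_middle_informative P then 1 else 0.

Definition rsum {A} (f : A -> R) (l : list A) : R := fold_right Rplus 0 (map f l).
Definition rmax (l : list R) : R := fold_right Rmax 0 l.

Definition U (M : itrace -> Prop) (h : val) : R :=
  ind (In h (dom M)) / INR (length (dom M)).
Definition U_HO (M : itrace -> Prop) (x : val) (o : nat -> val) : R :=
  U M x * ind (out M x = o).
Definition U_O (M : itrace -> Prop) (o : nat -> val) : R :=
  rsum (fun h => U_HO M h o) (dom M).
Definition U_cond (M : itrace -> Prop) (x : val) (o : nat -> val) : R :=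
  U_HO M x o / U_O M o.

Definition log2 (x : R) : R := ln x / ln 2.

Definition V_H (M : itrace -> Prop) : R := rmax (map (U M) (dom M)).
Definition V_HO (M : itrace -> Prop) : R :=
  rsum (fun o => U_O M o * rmax (map (fun x => U_cond M x o) (dom M))) (outs M).
Definition ME (M : itrace -> Prop) : R :=
  log2 (1 / V_H M) - log2 (1 / V_HO M).

Fixpoint gsum_from (k : nat) (l : list R) : R :=
  match l with nil => 0 | p :: l' => INR k * p + gsum_from (S k) l' end.
Definition sort_desc (ps : list R) : list R :=
  epsilon (inhabits nil) (fun l => Permutation ps l /\ Sorted Rge l).
Definition guess (ps : list R) : R := gsum_from 1 (sort_desc ps).

Definition G_H (M : itrace -> Prop) : R := guess (map (U M) (dom M)).
Definition G_HO (M : itrace -> Prop) : R :=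
  rsum (fun o => U_O M o * guess (map (fun x => U_cond M x o) (dom M))) (outs M).
Definition GE (M : itrace -> Prop) : R := G_H M - G_HO M.

(* Main.v *)
From Stdlib Require Import Reals QArith Qreals List Permutation Sorted ClassicalEpsilon Lra Lia FunctionalExtensionality.
Require Import Defs.
Open Scope R_scope.

Lemma ind_T (P : Prop) : P -> ind P = 1.
Proof. intro; unfold ind; destruct (excluded_middle_informative P); tauto. Qed.
Lemma ind_F (P : Prop) : ~ P -> ind P = 0.
Proof. intro; unfold ind; destruct (excluded_middle_informative P); tauto. Qed.
Lemma ind_iff (P Q : Prop) : (P <-> Q) -> ind P = ind Q.
Proof. intro; unfold ind; destruct (excluded_middle_informative P), (excluded_middle_informative Q); tauto. Qed.
Lemma ind_le (P Q : Prop) : (P -> Q) -> ind P <= ind Q.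
Proof. intro; unfold ind; destruct (excluded_middle_informative P), (excluded_middle_informative Q); try lra; tauto. Qed.
Lemma ind_01 (P : Prop) : 0 <= ind P <= 1.
Proof. unfold ind; destruct (excluded_middle_informative P); lra. Qed.
Lemma ind_not (P : Prop) : ind (~ P) = 1 - ind P.
Proof. unfold ind; destruct (excluded_middle_informative P), (excluded_middle_informative (~P)); try lra; tauto. Qed.

Section RS.
Context {A : Type}.
Lemma rsum_nil (f : A -> R) : rsum f nil = 0. Proof. reflexivity. Qed.
Lemma rsum_cons (f : A -> R) x l : rsum f (x :: l) = f x + rsum f l. Proof. reflexivity. Qed.
Lemma rsum_app (f : A -> R) l1 l2 : rsum f (l1 ++ l2) = rsum f l1 + rsum f l2.
Proof. induction l1; simpl; [unfold rsum; simpl; lra|]. rewrite !rsum_cons, IHl1; lra. Qed.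
Lemma rsum_ext_in (f g : A -> R) l : (forall x, In x l -> f x = g x) -> rsum f l = rsum g l.
Proof. induction l; intros Hf; [reflexivity|]. rewrite !rsum_cons, Hf, IHl; simpl; auto; intros; apply Hf; simpl; auto. Qed.
Lemma rsum_scal (f : A -> R) c l : rsum (fun x => c * f x) l = c * rsum f l.
Proof. induction l; [unfold rsum; simpl; lra|]. rewrite !rsum_cons, IHl; lra. Qed.
Lemma rsum_plus (f g : A -> R) l : rsum (fun x => f x + g x) l = rsum f l + rsum g l.
Proof. induction l; [unfold rsum; simpl; lra|]. rewrite !rsum_cons, IHl; lra. Qed.
Lemma rsum_const c (l : list A) : rsum (fun _ => c) l = c * INR (length l).
Proof. induction l; [unfold rsum; simpl; lra|]. rewrite rsum_cons, IHl. simpl length. rewrite S_INR; lra. Qed.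
Lemma rsum_le (f g : A -> R) l : (forall x, In x l -> f x <= g x) -> rsum f l <= rsum g l.
Proof. induction l; intros Hf; [unfold rsum; simpl; lra|]. rewrite !rsum_cons.
  assert (f a <= g a) by (apply Hf; simpl; auto). assert (rsum f l <= rsum g l) by (apply IHl; intros; apply Hf; simpl; auto). lra. Qed.
Lemma rsum_perm (f : A -> R) l l' : Permutation l l' -> rsum f l = rsum f l'.
Proof. induction 1; rewrite ?rsum_cons; try lra. Qed.
Lemma rsum_ind_le (P : A -> Prop) l : rsum (fun x => ind (P x)) l <= INR (length l).
Proof. rewrite <- (Rmult_1_l (INR _)), <- rsum_const. apply rsum_le; intros; apply ind_01. Qed.
Lemma rsum_ind_ge0 (P : A -> Prop) l : 0 <= rsum (fun x => ind (P x)) l.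
Proof. replace 0 with (rsum (fun _ : A => 0) l) by (rewrite rsum_const; lra). apply rsum_le; intros; apply ind_01. Qed.
End RS.

Lemma rsum_map {A B} (g : B -> R) (F : A -> B) l : rsum g (map F l) = rsum (fun x => g (F x)) l.
Proof. unfold rsum; now rewrite map_map. Qed.

Lemma rsum_exchange {A B} (F : A -> B -> R) la lb :
  rsum (fun a => rsum (fun b => F a b) lb) la = rsum (fun b => rsum (fun a => F a b) la) lb.
Proof. induction la.
  - rewrite rsum_nil. symmetry. replace 0 with (rsum (fun _ : B => 0) lb) by (rewrite rsum_const; lra).
    apply rsum_ext_in; intros; reflexivity.
  - rewrite rsum_cons, IHla, <- rsum_plus. apply rsum_ext_in; intros; rewrite rsum_cons; lra. Qed.

Lemma rsum_ind_nodup {A} (h : A -> R) l y : NoDup l -> In y l ->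
  rsum (fun o => ind (y = o) * h o) l = h y.
Proof. induction l; intros Hn Hi; [destruct Hi|]. inversion Hn; subst. rewrite rsum_cons.
  destruct Hi as [<-|Hi].
  - rewrite ind_T by reflexivity. replace (rsum _ l) with (rsum (fun _ : A => 0) l).
    + rewrite rsum_const; lra.
    + apply rsum_ext_in; intros x Hx. rewrite ind_F; [lra|]. intros <-; contradiction.
  - rewrite ind_F, IHl by (auto; intros <-; contradiction). lra. Qed.

Section QS.
Context {A B : Type}.
Definition Qs (g : A -> B) (L : list A) : R :=
  rsum (fun x => rsum (fun y => ind (g x <> g y)) L) L.
Definition dz (g : A -> B) L z : R := rsum (fun y => ind (g z <> g y)) L.

Lemma Q_cons g z L : Qs g (z :: L) = Qs g L + 2 * dz g L z.
Proof. unfold Qs, dz. rewrite rsum_cons, rsum_cons.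
  rewrite (ind_F (g z <> g z)) by tauto.
  transitivity (rsum (fun y => ind (g z <> g y)) L +
     rsum (fun x => ind (g z <> g x) + rsum (fun y => ind (g x <> g y)) L) L).
  - f_equal; [lra|]. apply rsum_ext_in; intros. rewrite rsum_cons. f_equal. apply ind_iff; split; intros H1 H2; apply H1; auto.
  - rewrite rsum_plus; lra. Qed.

Lemma Q_bound g L z : Qs g L <= 2 * INR (length L) * dz g L z.
Proof. unfold Qs. fold (dz g L).
  apply Rle_trans with (rsum (fun x => dz g L z + ind (g x <> g z) * INR (length L)) L).
  - apply rsum_le; intros x Hx. destruct (classic (g x = g z)) as [E|E].
    + rewrite ind_F by tauto. unfold dz; rewrite E; lra.
    + rewrite ind_T by auto. assert (0 <= dz g L z) by apply rsum_ind_ge0.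
      assert (dz g L x <= INR (length L)) by apply rsum_ind_le. lra.
  - rewrite rsum_plus, rsum_const.
    replace (rsum (fun x => ind (g x <> g z) * INR (length L)) L) with (INR (length L) * dz g L z).
    + lra.
    + unfold dz. rewrite <- rsum_scal. apply rsum_ext_in; intros. rewrite Rmult_comm. f_equal.
      apply ind_iff; split; intros H1 H2; apply H1; auto. Qed.

Lemma Q_step g L z : L <> nil -> Qs g L / INR (length L) <= Qs g (z :: L) / INR (length (z :: L)).
Proof. intros HL. rewrite Q_cons. simpl length. rewrite S_INR.
  assert (0 < INR (length L)) by (destruct L; [congruence|]; simpl length; rewrite S_INR; pose proof (pos_INR (length L)); lra).
  pose proof (Q_bound g L z).
  apply (Rmult_le_reg_r (INR (length L) * (INR (length L) + 1))). nra.
  field_simplify; try lra. Qed.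

Lemma Q_app g E L : L <> nil -> Qs g L / INR (length L) <= Qs g (E ++ L) / INR (length (E ++ L)).
Proof. intros HL. induction E; [simpl; lra|]. simpl app. eapply Rle_trans; [apply IHE|].
  apply Q_step. destruct E; simpl; [auto|congruence]. Qed.

Lemma Q_perm g L L' : Permutation L L' -> Qs g L = Qs g L'.
Proof. intros Hp. unfold Qs. rewrite (rsum_perm _ _ _ Hp). apply rsum_ext_in; intros. apply rsum_perm; auto. Qed.

Lemma Q_refine g g' L : (forall x y, In x L -> In y L -> g x <> g y -> g' x <> g' y) -> Qs g L <= Qs g' L.
Proof. intros Hr. unfold Qs. apply rsum_le; intros. apply rsum_le; intros. apply ind_le; auto. Qed.
End QS.

Lemma perm_split (D D' : list nat) : NoDup D -> NoDup D' -> incl D D' -> exists E, Permutation D' (E ++ D).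
Proof. intros H1 H2 H3. exists (filter (fun x => if in_dec Nat.eq_dec x D then false else true) D').
  apply NoDup_Permutation; auto.
  - apply NoDup_app; auto. apply NoDup_filter; auto. intros a Ha. apply filter_In in Ha. destruct (in_dec Nat.eq_dec a D); [discriminate (proj2 Ha)|assumption].
  - intros x; rewrite in_app_iff, filter_In. destruct (in_dec Nat.eq_dec x D); split; intros Hx.
    + right; auto.
    + auto.
    + left; auto.
    + destruct Hx as [[? ?]|?]; auto. Qed.

Lemma Q_mono (g g' : nat -> nat -> val) D D' : D <> nil -> NoDup D -> NoDup D' -> incl D D' ->
  (forall x y, In x D -> In y D -> g x <> g y -> g' x <> g' y) ->
  Qs g D / INR (length D) <= Qs g' D' / INR (length D').
Proof. intros Hn H1 H2 H3 Hr. destruct (perm_split D D' H1 H2 H3) as [E HE].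
  rewrite (Q_perm g' _ _ HE), (Permutation_length HE).
  eapply Rle_trans; [|apply Q_app; auto].
  assert (0 < INR (length D)) by (destruct D; [congruence|]; simpl length; rewrite S_INR; pose proof (pos_INR (length D)); lra).
  apply Rmult_le_compat_r; [apply Rlt_le, Rinv_0_lt_compat; auto|]. apply Q_refine; auto. Qed.

Lemma rmax_ge x l : In x l -> x <= rmax l.
Proof. induction l; intros Hi; [destruct Hi|]. unfold rmax; simpl; fold (rmax l).
  destruct Hi as [<-|Hi]; [apply Rmax_l|]. eapply Rle_trans; [apply IHl; auto|apply Rmax_r]. Qed.

Lemma rmax_01 a l : 0 <= a -> Forall (fun x => x = 0 \/ x = a) l -> 0 <= rmax l <= a.
Proof. intros Ha; induction 1 as [|x l Hx HF IH]; unfold rmax; simpl; [lra|]. fold (rmax l).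
  destruct Hx as [->| ->]; unfold Rmax; destruct (Rle_dec _ _); lra. Qed.

Lemma rmax_val a l : 0 <= a -> Forall (fun x => x = 0 \/ x = a) l -> In a l -> rmax l = a.
Proof. intros Ha HF Hi. pose proof (rmax_01 a l Ha HF). pose proof (rmax_ge a l Hi). lra. Qed.

Lemma gsum_zeros k r : gsum_from k (repeat 0 r) = 0.
Proof. revert k; induction r; intros; simpl; [lra|]. rewrite IHr; lra. Qed.
Lemma gsum_app0 k l r : gsum_from k (l ++ repeat 0 r) = gsum_from k l.
Proof. revert k; induction l; intros; simpl; [apply gsum_zeros|]. rewrite IHl; lra. Qed.
Lemma gsum_rep k a m : gsum_from k (repeat a m) = a * (INR m * INR k + INR m * (INR m - 1) / 2).
Proof. revert k; induction m; intros; simpl repeat; simpl gsum_from; [simpl; lra|].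
  rewrite IHm, !S_INR. field. Qed.

Lemma count_rsum a l : INR (count_occ Req_EM_T l a) = rsum (fun x => ind (x = a)) l.
Proof. induction l; [reflexivity|]. rewrite rsum_cons. simpl count_occ.
  destruct (Req_EM_T a0 a).
  - rewrite S_INR, IHl, ind_T by auto; lra.
  - rewrite IHl, ind_F by auto; lra. Qed.

Lemma perm_form a l : a <> 0 -> Forall (fun x => x = 0 \/ x = a) l ->
  exists r, Permutation l (repeat a (count_occ Req_EM_T l a) ++ repeat 0 r).
Proof. intros Ha; induction 1 as [|x l Hx HF IH]; [exists 0%nat; simpl; auto|]. destruct IH as [r Hr].
  destruct Hx as [->| ->].
  - exists (S r). simpl count_occ. destruct (Req_EM_T 0 a); [congruence|].
    simpl repeat. eapply Permutation_trans; [apply perm_skip, Hr|]. apply Permutation_middle.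
  - exists r. simpl count_occ. destruct (Req_EM_T a a); [|congruence]. simpl. apply perm_skip, Hr. Qed.

Lemma sorted_form a r c : 0 < a -> Sorted Rge (repeat a c ++ repeat 0 r).
Proof. intros Ha. induction c.
  - simpl. induction r; simpl; constructor; auto. destruct r; simpl; constructor; lra.
  - simpl. constructor; auto. destruct c; simpl; [destruct r; simpl; constructor; lra|]. constructor; lra. Qed.

Lemma sorted_unique a s : 0 < a -> Forall (fun x => x = 0 \/ x = a) s -> Sorted Rge s ->
  exists r, s = repeat a (count_occ Req_EM_T s a) ++ repeat 0 r.
Proof. intros Ha. induction s; intros HF HS; [exists 0%nat; reflexivity|].
  inversion HF; subst. apply Sorted_inv in HS as [HS Hd]. destruct (IHs H2 HS) as [r Hr].
  destruct H1 as [->| ->].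
  - assert (count_occ Req_EM_T s a = 0%nat) as Hc.
    { destruct (count_occ Req_EM_T s a) eqn:E; auto. rewrite Hr in Hd. simpl in Hd. inversion Hd. lra. }
    exists (S r). simpl count_occ. destruct (Req_EM_T 0 a); [lra|]. rewrite Hr at 1. rewrite Hc. reflexivity.
  - exists r. simpl count_occ. destruct (Req_EM_T a a); [|congruence]. simpl. rewrite Hr at 1. reflexivity. Qed.

Lemma guess_val a l : 0 < a -> Forall (fun x => x = 0 \/ x = a) l ->
  guess l = a * (rsum (fun x => ind (x = a)) l * (rsum (fun x => ind (x = a)) l + 1) / 2).
Proof. intros Ha HF. rewrite <- count_rsum. unfold guess, sort_desc.
  set (s := epsilon _ _).
  assert (Hs : Permutation l s /\ Sorted Rge s).
  { apply epsilon_spec. destruct (perm_form a l ltac:(lra) HF) as [r Hr]. eexists; split; [apply Hr|]. apply sorted_form; auto. }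
  destruct Hs as [Hp HS].
  assert (HFs : Forall (fun x => x = 0 \/ x = a) s).
  { rewrite Forall_forall in *. intros x Hx. apply HF. apply Permutation_in with s; auto. now apply Permutation_sym. }
  destruct (sorted_unique a s Ha HFs HS) as [r Hr]. rewrite Hr, gsum_app0, gsum_rep.
  rewrite (proj1 (Permutation_count_occ Req_EM_T l s) Hp a). simpl INR. field. Qed.

Lemma rsum_ind_ge1 {A} (P : A -> Prop) l x : In x l -> P x -> 1 <= rsum (fun y => ind (P y)) l.
Proof. induction l; intros Hi Hp; [destruct Hi|]. rewrite rsum_cons. destruct Hi as [<-|Hi].
  - rewrite ind_T by auto. pose proof (rsum_ind_ge0 P l); lra.
  - pose proof (IHl Hi Hp). pose proof (ind_01 (P a)); lra. Qed.

Section Prog.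
Variable M : itrace -> Prop.
Hypothesis HM : is_program M.

Lemma dom_spec : input_domain_list M (dom M) /\ dom M <> nil.
Proof. destruct HM as [Hd [l [Hl Hid]]].
  assert (Hs : input_domain_list M (dom M)) by (unfold dom; apply epsilon_spec; eauto).
  split; auto. destruct l as [|h l]; [congruence|]. destruct Hid as [_ Hid].
  destruct (proj1 (Hid h) (or_introl eq_refl)) as [t [Ht Th]].
  intros E. destruct Hs as [_ Hs]. assert (Hh : In (t 0%nat H) (dom M)) by (apply Hs; eauto). rewrite E in Hh; destruct Hh. Qed.

Lemma dom_in h : In h (dom M) <-> exists t, M t /\ t 0%nat H = h.
Proof. destruct dom_spec as [[_ Hs] _]. apply Hs. Qed.

Lemma out_spec h : In h (dom M) -> exists t, M t /\ t 0%nat H = h /\ forall i, out M h i = t (S i) O.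
Proof. intros Hh. apply dom_in in Hh as [t [Ht Th]].
  unfold out. set (P := fun o : nat -> val => exists t, M t /\ t 0%nat H = h /\ forall i, o i = t (S i) O).
  change (P (epsilon (inhabits (fun _ : nat => 0%nat)) P)). apply epsilon_spec. exists (fun i => t (S i) O). exists t; auto. Qed.

Lemma outs_spec : NoDup (outs M) /\ forall o, In o (outs M) <-> exists h, In h (dom M) /\ out M h = o.
Proof. unfold outs. set (P := fun l : list (nat -> val) => NoDup l /\ forall o, In o l <-> exists h, In h (dom M) /\ out M h = o).
  change (P (epsilon (inhabits nil) P)). apply epsilon_spec.
  assert (dec : forall x y : nat -> val, {x = y} + {x <> y}) by (intros; apply excluded_middle_informative).
  exists (nodup dec (map (out M) (dom M))). split; [apply NoDup_nodup|].
  intros o. rewrite nodup_In, in_map_iff. firstorder. Qed.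

Definition n := INR (length (dom M)).
Definition cnt o := rsum (fun h => ind (out M h = o)) (dom M).

Lemma n_pos : 0 < n.
Proof. unfold n. destruct dom_spec as [_ Hn]. destruct (dom M); [congruence|]. simpl length; rewrite S_INR; pose proof (pos_INR (length l)); lra. Qed.

Lemma U_in h : In h (dom M) -> U M h = / n.
Proof. intros Hh. unfold U. rewrite ind_T by auto. fold n. lra. Qed.

Lemma U_O_val o : U_O M o = cnt o / n.
Proof. unfold U_O, U_HO, cnt. unfold Rdiv. rewrite Rmult_comm, <- rsum_scal. apply rsum_ext_in; intros. rewrite U_in; auto. Qed.

Lemma cnt_pos o : In o (outs M) -> 1 <= cnt o.
Proof. intros Ho. apply outs_spec in Ho as [h [Hh Eh]]. eapply rsum_ind_ge1; eauto. Qed.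

Lemma Ucond_val x o : In x (dom M) -> In o (outs M) -> U_cond M x o = ind (out M x = o) / cnt o.
Proof. intros Hx Ho. pose proof (cnt_pos o Ho). pose proof n_pos. unfold U_cond, U_HO. rewrite U_O_val, U_in by auto. field. lra. Qed.

Lemma Ucond_F o : In o (outs M) -> Forall (fun x => x = 0 \/ x = / cnt o) (map (fun x => U_cond M x o) (dom M)).
Proof. intros Ho. apply Forall_forall. intros v Hv. apply in_map_iff in Hv as [x [<- Hx]].
  rewrite Ucond_val by auto. destruct (classic (out M x = o)); [rewrite ind_T|rewrite ind_F]; auto; [right|left]; unfold Rdiv; lra. Qed.

Lemma Ucond_cnt o : In o (outs M) -> rsum (fun x => ind (x = / cnt o)) (map (fun x => U_cond M x o) (dom M)) = cnt o.
Proof. intros Ho. pose proof (cnt_pos o Ho). rewrite rsum_map. unfold cnt at 2. apply rsum_ext_in; intros x Hx.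
  apply ind_iff. rewrite Ucond_val by auto. destruct (classic (out M x = o)) as [E|E].
  - rewrite ind_T by auto. split; auto. intros; unfold Rdiv; lra.
  - rewrite ind_F by auto. split; [|tauto]. intros Hc. exfalso. unfold Rdiv in Hc. rewrite Rmult_0_l in Hc.
    assert (0 < / cnt o) by (apply Rinv_0_lt_compat; lra). lra. Qed.

Lemma Ucond_in o : In o (outs M) -> In (/ cnt o) (map (fun x => U_cond M x o) (dom M)).
Proof. intros Ho. pose proof Ho as Ho'. apply outs_spec in Ho' as [h [Hh Eh]]. apply in_map_iff. exists h; split; auto.
  rewrite Ucond_val, ind_T by auto. unfold Rdiv; lra. Qed.

Lemma UH_F : Forall (fun x => x = 0 \/ x = / n) (map (U M) (dom M)).
Proof. apply Forall_forall. intros v Hv. apply in_map_iff in Hv as [x [<- Hx]]. right; apply U_in; auto. Qed.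

Lemma UH_in : In (/ n) (map (U M) (dom M)).
Proof. destruct dom_spec as [_ Hn]. destruct (dom M) as [|h l] eqn:E; [congruence|]. apply in_map_iff. exists h; split; [apply U_in; rewrite E|]; simpl; auto. Qed.

Lemma outs_exch (h : (nat -> val) -> R) : rsum (fun o => cnt o * h o) (outs M) = rsum (fun x => h (out M x)) (dom M).
Proof. unfold cnt. transitivity (rsum (fun o => rsum (fun x => ind (out M x = o) * h o) (dom M)) (outs M)).
  - apply rsum_ext_in; intros. rewrite Rmult_comm, <- rsum_scal. apply rsum_ext_in; intros; lra.
  - rewrite rsum_exchange. apply rsum_ext_in; intros x Hx. apply rsum_ind_nodup; [apply outs_spec|]. apply outs_spec; eauto. Qed.

Lemma ME_val : ME M = log2 (INR (length (outs M))).
Proof. pose proof n_pos as Hn.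
  assert (VH : V_H M = / n) by (apply rmax_val; [apply Rlt_le, Rinv_0_lt_compat; auto|apply UH_F|apply UH_in]).
  assert (VHO : V_HO M = INR (length (outs M)) / n).
  { unfold V_HO. transitivity (rsum (fun _ => / n) (outs M)); [|rewrite rsum_const; field; lra].
    apply rsum_ext_in; intros o Ho. pose proof (cnt_pos o Ho). rewrite U_O_val.
    rewrite (rmax_val (/ cnt o)); [field; lra| apply Rlt_le, Rinv_0_lt_compat; lra| apply Ucond_F; auto| apply Ucond_in; auto]. }
  assert (Hk : 0 < INR (length (outs M))).
  { destruct dom_spec as [_ Hd]. destruct (dom M) as [|h l] eqn:E; [congruence|].
    assert (Hin : In (out M h) (outs M)) by (apply outs_spec; exists h; rewrite E; simpl; auto).
    destruct (outs M); [destruct Hin|]. simpl length; rewrite S_INR; pose proof (pos_INR (length l0)); lra. }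
  unfold ME, log2. rewrite VH, VHO. replace (1 / / n) with n by (field; lra).
  replace (1 / (INR (length (outs M)) / n)) with (n * / INR (length (outs M))) by (field; lra).
  rewrite ln_mult, ln_Rinv by (try apply Rinv_0_lt_compat; lra). field. pose proof ln_lt_2; lra. Qed.

Lemma GE_val : GE M = Qs (out M) (dom M) / (2 * n).
Proof. pose proof n_pos as Hn.
  assert (GH : G_H M = (n + 1) / 2).
  { unfold G_H. rewrite (guess_val (/ n)); [|apply Rinv_0_lt_compat; auto|apply UH_F].
    rewrite rsum_map. rewrite (rsum_ext_in _ (fun _ => 1)), rsum_const. fold n. field; lra.
    intros; apply ind_T, U_in; auto. }
  assert (GHO : G_HO M = (rsum (fun o => cnt o * cnt o) (outs M) + rsum (fun o => cnt o * 1) (outs M)) / (2 * n)).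
  { unfold G_HO. unfold Rdiv. rewrite <- rsum_plus, Rmult_comm, <- rsum_scal. apply rsum_ext_in; intros o Ho.
    pose proof (cnt_pos o Ho). rewrite (guess_val (/ cnt o)); [|apply Rinv_0_lt_compat; lra|apply Ucond_F; auto].
    rewrite Ucond_cnt, U_O_val by auto. field. lra. }
  unfold GE. rewrite GH, GHO, !outs_exch.
  rewrite rsum_const. fold n.
  assert (Qs (out M) (dom M) = n * n - rsum (fun x => cnt (out M x)) (dom M)) as ->.
  { unfold Qs. transitivity (rsum (fun x => 1 * n + (-1) * cnt (out M x)) (dom M)).
    - apply rsum_ext_in; intros x Hx. unfold cnt, n.
      rewrite <- rsum_const, <- rsum_scal, <- rsum_plus. apply rsum_ext_in; intros y Hy.
      rewrite (ind_iff _ (~ (out M y = out M x))), ind_not; [lra|]. split; intros H1 H2; apply H1; auto.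
    - rewrite rsum_plus, rsum_scal, rsum_const, rsum_scal. fold n. lra. }
  field. lra. Qed.
End Prog.

Lemma outs_pos M : is_program M -> (0 < length (outs M))%nat.
Proof. intros HM. destruct (dom_spec M HM) as [_ Hd]. destruct (dom M) as [|h l] eqn:E; [congruence|].
  assert (Hin : In (out M h) (outs M)) by (apply (proj2 (outs_spec M HM)); exists h; rewrite E; simpl; auto).
  destruct (outs M); [destruct Hin|]. simpl; lia. Qed.

Lemma refine S S' : is_program S -> is_program S' -> incl (dom S) (dom S') ->
  (forall h1 h2, In h1 (dom S) -> In h2 (dom S) -> out S h1 <> out S h2 -> out S' h1 <> out S' h2) ->
  ME S <= ME S' /\ GE S <= GE S'.
Proof. intros HS HS' Hinc Hr. split.
  - rewrite (ME_val S HS), (ME_val S' HS').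
    set (rep := fun o => epsilon (inhabits 0%nat) (fun h => In h (dom S) /\ out S h = o)).
    assert (Hrep : forall o, In o (outs S) -> In (rep o) (dom S) /\ out S (rep o) = o).
    { intros o Ho. apply (proj2 (outs_spec S HS)) in Ho. unfold rep. apply epsilon_spec; auto. }
    assert (Hle : (length (outs S) <= length (outs S'))%nat).
    { rewrite <- (length_map (fun o => out S' (rep o))). apply NoDup_incl_length.
      - apply NoDup_map_NoDup_ForallPairs; [|apply (proj1 (outs_spec S HS))].
        intros o1 o2 H1 H2 E. destruct (Hrep o1 H1) as [A1 B1], (Hrep o2 H2) as [A2 B2].
        apply NNPP; intros Hne. apply (Hr (rep o1) (rep o2)); auto. congruence.
      - intros v Hv. apply in_map_iff in Hv as [o [<- Ho]]. apply (proj2 (outs_spec S' HS')). exists (rep o).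
        split; auto. apply Hinc, Hrep; auto. }
    pose proof (outs_pos S HS) as Hk. apply le_INR in Hle. apply lt_INR in Hk. simpl in Hk.
    unfold log2. apply Rmult_le_compat_r; [apply Rlt_le, Rinv_0_lt_compat; pose proof ln_lt_2; lra|].
    destruct (Rle_lt_or_eq_dec _ _ Hle) as [L|E]; [apply Rlt_le, ln_increasing; lra|rewrite E; lra].
  - rewrite (GE_val S HS), (GE_val S' HS').
    pose proof (n_pos S HS). pose proof (n_pos S' HS').
    replace (Qs (out S) (dom S) / (2 * n S)) with (/2 * (Qs (out S) (dom S) / INR (length (dom S)))) by (unfold n in *; field; lra).
    replace (Qs (out S') (dom S') / (2 * n S')) with (/2 * (Qs (out S') (dom S') / INR (length (dom S')))) by (unfold n in *; field; lra).
    apply Rmult_le_compat_l; [lra|]. apply Q_mono; auto.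
    + apply (dom_spec S HS).
    + apply (dom_spec S HS).
    + apply (dom_spec S' HS'). Qed.

Lemma fin_bound {A} (l : list A) (P : A -> nat -> Prop) :
  (forall a, In a l -> exists i, P a i) -> exists N, forall a, In a l -> exists i, (i < N)%nat /\ P a i.
Proof. induction l; intros Hl; [exists 0%nat; intros a []|].
  destruct IHl as [N HN]; [intros; apply Hl; simpl; auto|]. destruct (Hl a (or_introl eq_refl)) as [i Hi].
  exists (S (Nat.max N i)). intros b [<-|Hb].
  - exists i; split; auto; lia.
  - destruct (HN b Hb) as [j [Hj Pj]]. exists j; split; auto; lia. Qed.

Definition tr (S : itrace -> Prop) (h : val) : itrace :=
  epsilon (inhabits (fun _ _ => 0%nat)) (fun t => S t /\ t 0%nat H = h).
Definition prefix S N h : ftrace := map (tr S h) (seq 0 (Datatypes.S N)).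

Lemma tr_spec S h : is_program S -> In h (dom S) -> S (tr S h) /\ tr S h 0%nat H = h.
Proof. intros HS Hh. apply (dom_in S HS) in Hh. unfold tr. apply epsilon_spec; auto. Qed.

Lemma out_tr S h i : is_program S -> In h (dom S) -> out S h i = tr S h (Datatypes.S i) O.
Proof. intros HS Hh. destruct (out_spec S HS h Hh) as [t [Ht [Th Ho]]]. destruct (tr_spec S h HS Hh) as [A1 A2].
  rewrite Ho. destruct HS as [Hd _]. rewrite (Hd t (tr S h)); auto; congruence. Qed.

Lemma tconcat_prefix S N h t' i : (i <= N)%nat -> tconcat (prefix S N h) t' i = tr S h i.
Proof. intros Hi. unfold tconcat, prefix. rewrite length_map, length_seq.
  replace (Nat.ltb i (Datatypes.S N)) with true by (symmetry; apply Nat.ltb_lt; lia).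
  rewrite (nth_indep _ _ (tr S h 0%nat)) by (rewrite length_map, length_seq; lia).
  rewrite map_nth, seq_nth by lia. reflexivity. Qed.

Lemma construct S : is_program S -> exists T, is_obs T /\ obs_le T S /\
  forall S', is_program S' -> obs_le T S' -> ME S <= ME S' /\ GE S <= GE S'.
Proof. intros HS.
  destruct (fin_bound (list_prod (dom S) (dom S))
     (fun p i => out S (fst p) <> out S (snd p) -> out S (fst p) i <> out S (snd p) i)) as [N HN].
  { intros [h1 h2] _. simpl. destruct (classic (out S h1 = out S h2)) as [E|E]; [exists 0%nat; tauto|].
    destruct (classic (exists i, out S h1 i <> out S h2 i)) as [[i Hi]|Hn]; [exists i; auto|].
    exfalso; apply E, functional_extensionality; intros i. apply NNPP; intros Hi; apply Hn; eauto. }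
  exists (fun l => In l (map (prefix S N) (dom S))). split; [|split].
  - split.
    + intros s s' r r' H1 H2 Hs. apply in_map_iff in H1 as [h1 [E1 I1]]. apply in_map_iff in H2 as [h2 [E2 I2]].
      assert (F1 : tr S h1 0%nat = s) by (unfold prefix in E1; simpl in E1; injection E1; auto).
      assert (F2 : tr S h2 0%nat = s') by (unfold prefix in E2; simpl in E2; injection E2; auto).
      assert (h1 = h2).
      { rewrite <- (proj2 (tr_spec S h1 HS I1)), <- (proj2 (tr_spec S h2 HS I2)). congruence. }
      subst h2. rewrite <- E1, <- E2. reflexivity.
    + exists (map (prefix S N) (dom S)). tauto.
  - intros t Ht. apply in_map_iff in Ht as [h [<- Hh]]. exists (fun i : nat => tr S h (i + Datatypes.S N)%nat).
    replace (tconcat _ _) with (tr S h); [apply tr_spec; auto|].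
    apply functional_extensionality; intros i. destruct (Nat.le_gt_cases i N).
    + rewrite tconcat_prefix; auto.
    + unfold tconcat, prefix. rewrite length_map, length_seq.
      replace (Nat.ltb i (Datatypes.S N)) with false by (symmetry; apply Nat.ltb_ge; lia).
      f_equal; lia.
  - intros S' HS' Hle.
    assert (CA : forall h, In h (dom S) -> In h (dom S') /\ forall i, (i < N)%nat -> out S' h i = out S h i).
    { intros h Hh. destruct (Hle (prefix S N h)) as [t' Ht']; [apply in_map_iff; eauto|].
      set (u := tconcat (prefix S N h) t') in *.
      assert (U0 : u 0%nat H = h) by (unfold u; rewrite tconcat_prefix by lia; apply tr_spec; auto).
      assert (Hd : In h (dom S')) by (apply (dom_in S' HS'); eauto).
      split; auto. intros i Hi. destruct (out_spec S' HS' h Hd) as [t'' [Ht'' [T0 Ho]]].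
      destruct HS' as [Hdet _]. rewrite (Hdet t'' u) in Ho by (auto; congruence).
      rewrite Ho, out_tr by auto. unfold u. rewrite tconcat_prefix by lia. reflexivity. }
    apply refine; auto.
    + intros h Hh; apply CA; auto.
    + intros h1 h2 H1 H2 Hne E. destruct (HN (h1, h2)) as [i [Hi Pi]]; [apply in_prod; auto|].
      simpl in Pi. apply (Pi Hne). rewrite <- (proj2 (CA h1 H1) i Hi), <- (proj2 (CA h2 H2) i Hi), E. reflexivity. Qed.

Theorem theorem16 : forall q : Q,
  safety (fun M => (ME M <= Q2R q)%R) /\ safety (fun M => (GE M <= Q2R q)%R).
Proof. intros q. split; intros S HS Hn; destruct (construct S HS) as [T [H1 [H2 H3]]]; exists T; split; auto; split; auto;
  intros S' HS' Hle Hc; apply Hn; destruct (H3 S' HS' Hle); lra. Qed.
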